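(* Let $\mathcal{C}$ be a peircean bicategory, write $a;^\bullet b:=\neg(\neg a;\neg b)$ and $\mathrm{id}^\bullet_X:=\neg\,\mathrm{id}_X$. For every arrow $c:X\to Y$: (1) $c;(\neg c)^\dagger\le\mathrm{id}^\bullet_X$; (2) $\mathrm{id}_Y\le(\neg c)^\dagger;^\bullet c$; (3) $(\neg c)^\dagger;c\le\mathrm{id}^\bullet_Y$; (4) $\mathrm{id}_X\le c;^\bullet(\neg c)^\dagger$.
   Context: Composition $;$ in diagrammatic order. A cartesian bicategory is a poset-enriched symmetric monoidal category with, for each $X$, commutative comonoid $(\mathrm{copy}_X,\mathrm{disc}_X)$ and monoid $(\mathrm{cocopy}_X,\mathrm{codisc}_X)$ forming special Frobenius bimonoids, comonoid left adjoint to monoid, every arrow $c$ satisfying $c;\mathrm{copy}\le\mathrm{copy};(c\otimes c)$ and $c;\mathrm{disc}\le\mathrm{disc}$, with standard coherence. A map is an arrow $f$ with $f;\mathrm{copy}=\mathrm{copy};(f\otimes f)$ and $f;\mathrm{disc}=\mathrm{disc}$. A peircean bicategory is a cartesian bicategory whose homsets carry Boolean algebras (with the given order) such that $f;\neg c=\neg(f;c)$ for every map $f:X\to Y$ and arrow $c:Y\to Z$. The converse of $c:X\to Y$ is $c^\dagger=(\mathrm{id}_Y\otimes(\mathrm{codisc}_X;\mathrm{copy}_X));(\mathrm{id}_Y\otimes c\otimes\mathrm{id}_X);((\mathrm{cocopy}_Y;\mathrm{disc}_Y)\otimes\mathrm{id}_X):Y\to X$. *)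

(* Defs.v *)
Record poset_smc := {
  ob : Type;
  hom : ob -> ob -> Type;
  le : forall {X Y : ob}, hom X Y -> hom X Y -> Prop;
  le_refl : forall X Y (a : hom X Y), le a a;
  le_trans : forall X Y (a b c : hom X Y), le a b -> le b c -> le a c;
  le_antisym : forall X Y (a b : hom X Y), le a b -> le b a -> a = b;

  seq : forall {X Y Z : ob}, hom X Y -> hom Y Z -> hom X Z;
  idm : forall (X : ob), hom X X;
  seq_idl : forall X Y (a : hom X Y), seq (idm X) a = a;
  seq_idr : forall X Y (a : hom X Y), seq a (idm Y) = a;
  seq_assoc : forall X Y Z W (a : hom X Y) (b : hom Y Z) (c : hom Z W),
      seq (seq a b) c = seq a (seq b c);
  seq_mono : forall X Y Z (a a' : hom X Y) (b b' : hom Y Z),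
      le a a' -> le b b' -> le (seq a b) (seq a' b');

  tens : ob -> ob -> ob;
  tensh : forall {X Y X' Y' : ob}, hom X Y -> hom X' Y' -> hom (tens X X') (tens Y Y');
  unit : ob;
  tens_id : forall X Y, tensh (idm X) (idm Y) = idm (tens X Y);
  tens_seq : forall X Y Z X' Y' Z' (a : hom X Y) (b : hom Y Z) (a' : hom X' Y') (b' : hom Y' Z'),
      tensh (seq a b) (seq a' b') = seq (tensh a a') (tensh b b');
  tens_mono : forall X Y X' Y' (a b : hom X Y) (a' b' : hom X' Y'),
      le a b -> le a' b' -> le (tensh a a') (tensh b b');

  assoc : forall X Y Z, hom (tens (tens X Y) Z) (tens X (tens Y Z));
  assoc_inv : forall X Y Z, hom (tens X (tens Y Z)) (tens (tens X Y) Z);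
  assoc_inv_l : forall X Y Z, seq (assoc X Y Z) (assoc_inv X Y Z) = idm _;
  assoc_inv_r : forall X Y Z, seq (assoc_inv X Y Z) (assoc X Y Z) = idm _;
  lunit : forall X, hom (tens unit X) X;
  lunit_inv : forall X, hom X (tens unit X);
  lunit_inv_l : forall X, seq (lunit X) (lunit_inv X) = idm _;
  lunit_inv_r : forall X, seq (lunit_inv X) (lunit X) = idm _;
  runit : forall X, hom (tens X unit) X;
  runit_inv : forall X, hom X (tens X unit);
  runit_inv_l : forall X, seq (runit X) (runit_inv X) = idm _;
  runit_inv_r : forall X, seq (runit_inv X) (runit X) = idm _;
  sym : forall X Y, hom (tens X Y) (tens Y X);

  assoc_nat : forall X Y Z X' Y' Z' (a : hom X X') (b : hom Y Y') (c : hom Z Z'),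
      seq (tensh (tensh a b) c) (assoc X' Y' Z') = seq (assoc X Y Z) (tensh a (tensh b c));
  lunit_nat : forall X Y (a : hom X Y),
      seq (tensh (idm unit) a) (lunit Y) = seq (lunit X) a;
  runit_nat : forall X Y (a : hom X Y),
      seq (tensh a (idm unit)) (runit Y) = seq (runit X) a;
  sym_nat : forall X Y X' Y' (a : hom X X') (b : hom Y Y'),
      seq (tensh a b) (sym X' Y') = seq (sym X Y) (tensh b a);

  pentagon : forall W X Y Z,
      seq (seq (tensh (assoc W X Y) (idm Z)) (assoc W (tens X Y) Z))
          (tensh (idm W) (assoc X Y Z))
      = seq (assoc (tens W X) Y Z) (assoc W X (tens Y Z));
  triangle : forall X Y,
      seq (assoc X unit Y) (tensh (idm X) (lunit Y)) = tensh (runit X) (idm Y);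
  hexagon : forall X Y Z,
      seq (seq (assoc X Y Z) (sym X (tens Y Z))) (assoc Y Z X)
      = seq (seq (tensh (sym X Y) (idm Z)) (assoc Y X Z)) (tensh (idm Y) (sym X Z));
  sym_inv : forall X Y, seq (sym X Y) (sym Y X) = idm _
}.

Arguments le {C X Y} _ _ : rename.
Arguments seq {C X Y Z} _ _ : rename.
Arguments idm {C} X : rename.
Arguments tens {C} _ _ : rename.
Arguments tensh {C X Y X' Y'} _ _ : rename.
Arguments unit {C} : rename.
Arguments assoc {C} X Y Z : rename.
Arguments assoc_inv {C} X Y Z : rename.
Arguments lunit {C} X : rename.
Arguments lunit_inv {C} X : rename.
Arguments runit {C} X : rename.
Arguments runit_inv {C} X : rename.
Arguments sym {C} X Y : rename.

Declare Scope cb_scope.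
Delimit Scope cb_scope with cb.
Notation "a ;; b" := (seq a b) (at level 40, left associativity) : cb_scope.
Notation "a ⊗ b" := (tensh a b) (at level 35) : cb_scope.
Notation "a ≤ b" := (le a b) (at level 70) : cb_scope.
Open Scope cb_scope.

Definition interchange {C : poset_smc} (X Y : ob C) :
    hom C (tens (tens X X) (tens Y Y)) (tens (tens X Y) (tens X Y)) :=
  assoc X X (tens Y Y)
  ;; (idm X ⊗ assoc_inv X Y Y)
  ;; (idm X ⊗ (sym X Y ⊗ idm Y))
  ;; (idm X ⊗ assoc Y X Y)
  ;; assoc_inv X Y (tens X Y).

Record cartesian_bicategory (C : poset_smc) := {
  copy : forall X : ob C, hom C X (tens X X);
  disc : forall X : ob C, hom C X unit;
  cocopy : forall X : ob C, hom C (tens X X) X;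
  codisc : forall X : ob C, hom C unit X;

  copy_assoc : forall X,
      copy X ;; (copy X ⊗ idm X) ;; assoc X X X = copy X ;; (idm X ⊗ copy X);
  copy_unitl : forall X, copy X ;; (disc X ⊗ idm X) ;; lunit X = idm X;
  copy_unitr : forall X, copy X ;; (idm X ⊗ disc X) ;; runit X = idm X;
  copy_comm : forall X, copy X ;; sym X X = copy X;
  cocopy_assoc : forall X,
      assoc_inv X X X ;; (cocopy X ⊗ idm X) ;; cocopy X = (idm X ⊗ cocopy X) ;; cocopy X;
  cocopy_unitl : forall X, lunit_inv X ;; (codisc X ⊗ idm X) ;; cocopy X = idm X;
  cocopy_unitr : forall X, runit_inv X ;; (idm X ⊗ codisc X) ;; cocopy X = idm X;
  cocopy_comm : forall X, sym X X ;; cocopy X = cocopy X;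
  frobenius_l : forall X,
      (copy X ⊗ idm X) ;; assoc X X X ;; (idm X ⊗ cocopy X) = cocopy X ;; copy X;
  frobenius_r : forall X,
      (idm X ⊗ copy X) ;; assoc_inv X X X ;; (cocopy X ⊗ idm X) = cocopy X ;; copy X;
  special : forall X, copy X ;; cocopy X = idm X;
  copy_adj_unit : forall X, idm X ≤ copy X ;; cocopy X;
  copy_adj_counit : forall X, cocopy X ;; copy X ≤ idm (tens X X);
  disc_adj_unit : forall X, idm X ≤ disc X ;; codisc X;
  disc_adj_counit : forall X, codisc X ;; disc X ≤ idm unit;
  lax_copy : forall X Y (c : hom C X Y), c ;; copy Y ≤ copy X ;; (c ⊗ c);
  lax_disc : forall X Y (c : hom C X Y), c ;; disc Y ≤ disc X;
  copy_tens : forall X Y, copy (tens X Y) = (copy X ⊗ copy Y) ;; interchange X Y;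
  disc_tens : forall X Y, disc (tens X Y) = (disc X ⊗ disc Y) ;; lunit unit;
  copy_unit : copy unit = lunit_inv unit;
  disc_unit : disc unit = idm unit;
  cocopy_tens : forall X Y, interchange X Y ;; cocopy (tens X Y) = (cocopy X ⊗ cocopy Y);
  codisc_tens : forall X Y, codisc (tens X Y) = lunit_inv unit ;; (codisc X ⊗ codisc Y);
  cocopy_unit : cocopy unit = lunit unit;
  codisc_unit : codisc unit = idm unit
}.

Arguments copy {C} _ X : rename.
Arguments disc {C} _ X : rename.
Arguments cocopy {C} _ X : rename.
Arguments codisc {C} _ X : rename.

Definition is_map {C : poset_smc} (CB : cartesian_bicategory C) {X Y : ob C}
    (f : hom C X Y) : Prop :=
  f ;; copy CB Y = copy CB X ;; (f ⊗ f) /\ f ;; disc CB Y = disc CB X.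

Definition converse {C : poset_smc} (CB : cartesian_bicategory C) {X Y : ob C}
    (c : hom C X Y) : hom C Y X :=
  runit_inv Y
  ;; (idm Y ⊗ (codisc CB X ;; copy CB X))
  ;; assoc_inv Y X X
  ;; ((idm Y ⊗ c) ⊗ idm X)
  ;; ((cocopy CB Y ;; disc CB Y) ⊗ idm X)
  ;; lunit X.

Record boolean_homs (C : poset_smc) := {
  bmeet : forall X Y : ob C, hom C X Y -> hom C X Y -> hom C X Y;
  bjoin : forall X Y : ob C, hom C X Y -> hom C X Y -> hom C X Y;
  btop : forall X Y : ob C, hom C X Y;
  bbot : forall X Y : ob C, hom C X Y;
  bneg : forall X Y : ob C, hom C X Y -> hom C X Y;
  bmeet_glb : forall X Y (a b z : hom C X Y), z ≤ bmeet X Y a b <-> (z ≤ a /\ z ≤ b);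
  bjoin_lub : forall X Y (a b z : hom C X Y), bjoin X Y a b ≤ z <-> (a ≤ z /\ b ≤ z);
  btop_max : forall X Y (a : hom C X Y), a ≤ btop X Y;
  bbot_min : forall X Y (a : hom C X Y), bbot X Y ≤ a;
  bdistr : forall X Y (a b c : hom C X Y),
      bmeet X Y a (bjoin X Y b c) = bjoin X Y (bmeet X Y a b) (bmeet X Y a c);
  bneg_meet : forall X Y (a : hom C X Y), bmeet X Y a (bneg X Y a) = bbot X Y;
  bneg_join : forall X Y (a : hom C X Y), bjoin X Y a (bneg X Y a) = btop X Y
}.

Arguments bneg {C} _ {X Y} _ : rename.

Definition peircean {C : poset_smc} (CB : cartesian_bicategory C) (B : boolean_homs C) : Prop :=
  forall (X Y Z : ob C) (f : hom C X Y) (c : hom C Y Z),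
    is_map CB f -> f ;; bneg B c = bneg B (f ;; c).

Definition dseq {C : poset_smc} (B : boolean_homs C) {X Y Z : ob C}
    (a : hom C X Y) (b : hom C Y Z) : hom C X Z :=
  bneg B (bneg B a ;; bneg B b).

Definition did {C : poset_smc} (B : boolean_homs C) (X : ob C) : hom C X X :=
  bneg B (idm X).

(* Main.v *)
Require Import Defs.

Ltac ra := repeat rewrite seq_assoc.

Lemma rw2 {C : poset_smc} {A B D E : ob C} (x : hom C A B) (y : hom C B D) (z : hom C A D)
  (r : hom C D E) : x ;; y = z -> x ;; (y ;; r) = z ;; r.
Proof. intros H. rewrite <- seq_assoc, H. reflexivity. Qed.

Lemma rw3 {C : poset_smc} {A B D F E : ob C} (x : hom C A B) (y : hom C B D) (w : hom C D F)
  (z : hom C A F) (r : hom C F E) : x ;; y ;; w = z -> x ;; (y ;; (w ;; r)) = z ;; r.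
Proof. intros H. rewrite <- H. ra. reflexivity. Qed.

Lemma tsplit {C : poset_smc} {A B D A' B' D' : ob C} (a : hom C A B) (b : hom C B D)
  (a' : hom C A' B') (b' : hom C B' D') : (a ;; b) ⊗ (a' ;; b') = (a ⊗ a') ;; (b ⊗ b').
Proof. apply tens_seq. Qed.

Lemma tsr {C : poset_smc} {X A B D : ob C} (f : hom C A B) (g : hom C B D) :
  idm X ⊗ (f ;; g) = (idm X ⊗ f) ;; (idm X ⊗ g).
Proof. rewrite <- tens_seq, seq_idl. reflexivity. Qed.

Lemma tsl {C : poset_smc} {X A B D : ob C} (f : hom C A B) (g : hom C B D) :
  (f ;; g) ⊗ idm X = (f ⊗ idm X) ;; (g ⊗ idm X).
Proof. rewrite <- tens_seq, seq_idl. reflexivity. Qed.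

Lemma tx1 {C : poset_smc} {A B A' B' : ob C} (a : hom C A B) (b : hom C A' B') :
  a ⊗ b = (a ⊗ idm A') ;; (idm B ⊗ b).
Proof. rewrite <- tens_seq, seq_idl, seq_idr. reflexivity. Qed.

Lemma tx2 {C : poset_smc} {A B A' B' : ob C} (a : hom C A B) (b : hom C A' B') :
  a ⊗ b = (idm A ⊗ b) ;; (a ⊗ idm B').
Proof. rewrite <- tens_seq, seq_idl, seq_idr. reflexivity. Qed.

Lemma tcomm {C : poset_smc} {A B A' B' : ob C} (a : hom C A B) (b : hom C A' B') :
  (a ⊗ idm A') ;; (idm B ⊗ b) = (idm A ⊗ b) ;; (a ⊗ idm B').
Proof. rewrite <- tx1, <- tx2. reflexivity. Qed.

Lemma lr {C : poset_smc} {X Y : ob C} (a : hom C X Y) : a ≤ a.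
Proof. apply le_refl. Qed.
Lemma lt {C : poset_smc} {X Y : ob C} (a b c : hom C X Y) : a ≤ b -> b ≤ c -> a ≤ c.
Proof. apply le_trans. Qed.
Lemma sm {C : poset_smc} {X Y Z : ob C} (a a' : hom C X Y) (b b' : hom C Y Z) :
  a ≤ a' -> b ≤ b' -> a ;; b ≤ a' ;; b'.
Proof. apply seq_mono. Qed.
Lemma sml {C : poset_smc} {X Y Z : ob C} (a a' : hom C X Y) (b : hom C Y Z) :
  a ≤ a' -> a ;; b ≤ a' ;; b.
Proof. intros; apply sm; auto; apply lr. Qed.
Lemma smr {C : poset_smc} {X Y Z : ob C} (a : hom C X Y) (b b' : hom C Y Z) :
  b ≤ b' -> a ;; b ≤ a ;; b'.
Proof. intros; apply sm; auto; apply lr. Qed.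
Lemma tm {C : poset_smc} {X Y X' Y' : ob C} (a b : hom C X Y) (a' b' : hom C X' Y') :
  a ≤ b -> a' ≤ b' -> a ⊗ a' ≤ b ⊗ b'.
Proof. apply tens_mono. Qed.
Lemma leq {C : poset_smc} {X Y : ob C} (a b : hom C X Y) : a = b -> a ≤ b.
Proof. intros ->; apply lr. Qed.

Lemma aK {C : poset_smc} {X Y Z W : ob C} (r : hom C _ W) :
  assoc X Y Z ;; (assoc_inv X Y Z ;; r) = r.
Proof. rewrite <- seq_assoc, assoc_inv_l, seq_idl. reflexivity. Qed.
Lemma a'K {C : poset_smc} {X Y Z W : ob C} (r : hom C _ W) :
  assoc_inv X Y Z ;; (assoc X Y Z ;; r) = r.
Proof. rewrite <- seq_assoc, assoc_inv_r, seq_idl. reflexivity. Qed.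
Lemma lK {C : poset_smc} {X W : ob C} (r : hom C _ W) : lunit X ;; (lunit_inv X ;; r) = r.
Proof. rewrite <- seq_assoc, lunit_inv_l, seq_idl. reflexivity. Qed.
Lemma l'K {C : poset_smc} {X W : ob C} (r : hom C _ W) : lunit_inv X ;; (lunit X ;; r) = r.
Proof. rewrite <- seq_assoc, lunit_inv_r, seq_idl. reflexivity. Qed.
Lemma rK {C : poset_smc} {X W : ob C} (r : hom C _ W) : runit X ;; (runit_inv X ;; r) = r.
Proof. rewrite <- seq_assoc, runit_inv_l, seq_idl. reflexivity. Qed.
Lemma r'K {C : poset_smc} {X W : ob C} (r : hom C _ W) : runit_inv X ;; (runit X ;; r) = r.
Proof. rewrite <- seq_assoc, runit_inv_r, seq_idl. reflexivity. Qed.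

Lemma assoc_inv_nat {C : poset_smc} {X Y Z X' Y' Z' : ob C} (a : hom C X X') (b : hom C Y Y') (c : hom C Z Z') :
  (a ⊗ (b ⊗ c)) ;; assoc_inv X' Y' Z' = assoc_inv X Y Z ;; ((a ⊗ b) ⊗ c).
Proof.
  rewrite <- (seq_idl _ _ _ (a ⊗ (b ⊗ c) ;; _)).
  rewrite <- (assoc_inv_r _ X Y Z). ra. rewrite <- (seq_assoc _ _ _ _ _ (assoc X Y Z)).
  rewrite <- assoc_nat. ra. rewrite assoc_inv_l, seq_idr. reflexivity.
Qed.
Lemma lunit_inv_nat {C : poset_smc} {X Y : ob C} (a : hom C X Y) :
  a ;; lunit_inv Y = lunit_inv X ;; (idm unit ⊗ a).
Proof.
  rewrite <- (seq_idl _ _ _ (a ;; _)), <- (lunit_inv_r _ X). ra.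
  rewrite <- (seq_assoc _ _ _ _ _ (lunit X)), <- lunit_nat. ra.
  rewrite lunit_inv_l, seq_idr. reflexivity.
Qed.
Lemma runit_inv_nat {C : poset_smc} {X Y : ob C} (a : hom C X Y) :
  a ;; runit_inv Y = runit_inv X ;; (a ⊗ idm unit).
Proof.
  rewrite <- (seq_idl _ _ _ (a ;; _)), <- (runit_inv_r _ X). ra.
  rewrite <- (seq_assoc _ _ _ _ _ (runit X)), <- runit_nat. ra.
  rewrite runit_inv_l, seq_idr. reflexivity.
Qed.

Lemma rcancel {C : poset_smc} {X Y : ob C} (f g : hom C X Y) :
  f ⊗ idm unit = g ⊗ idm unit -> f = g.
Proof.
  intros H.
  assert (E : forall h : hom C X Y, h = runit_inv X ;; (h ⊗ idm unit) ;; runit Y).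
  { intros h. ra. rewrite runit_nat. rewrite r'K. reflexivity. }
  rewrite (E f), (E g), H. reflexivity.
Qed.
Lemma lcancel {C : poset_smc} {X Y : ob C} (f g : hom C X Y) :
  idm unit ⊗ f = idm unit ⊗ g -> f = g.
Proof.
  intros H.
  assert (E : forall h : hom C X Y, h = lunit_inv X ;; (idm unit ⊗ h) ;; lunit Y).
  { intros h. ra. rewrite lunit_nat. rewrite l'K. reflexivity. }
  rewrite (E f), (E g), H. reflexivity.
Qed.
Lemma iso_cancel_l {C : poset_smc} {A B D : ob C} (i : hom C A B) (j : hom C B A) (f g : hom C B D) :
  j ;; i = idm B -> i ;; f = i ;; g -> f = g.
Proof.
  intros Hji H. rewrite <- (seq_idl _ _ _ f), <- (seq_idl _ _ _ g), <- Hji. ra. rewrite H. reflexivity.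
Qed.
Lemma iso_cancel_r {C : poset_smc} {A B D : ob C} (i : hom C B D) (j : hom C D B) (f g : hom C A B) :
  i ;; j = idm B -> f ;; i = g ;; i -> f = g.
Proof.
  intros Hij H. rewrite <- (seq_idr _ _ _ f), <- (seq_idr _ _ _ g), <- Hij.
  rewrite <- !seq_assoc, H. reflexivity.
Qed.


Lemma kb {C : poset_smc} (A B : ob C) :
  runit (tens A B) = assoc A B unit ;; (idm A ⊗ runit B).
Proof.
  apply rcancel.
  apply (iso_cancel_r (assoc A B unit) (assoc_inv A B unit)); [apply assoc_inv_l|].
  rewrite <- triangle.
  rewrite <- (tens_id _ A B).
  rewrite seq_assoc, assoc_nat, <- seq_assoc.
  rewrite <- pentagon. ra.
  rewrite <- (tens_seq _ _ _ _ _ _ _ (idm A) (idm A)), seq_idl, triangle.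
  rewrite <- assoc_nat.
  rewrite <- seq_assoc, <- (tens_seq _ _ _ _ _ _ _ _ _ (idm unit) (idm unit)), seq_idl.
  reflexivity.
Qed.

Lemma ka {C : poset_smc} (A B : ob C) :
  assoc unit A B ;; lunit (tens A B) = lunit A ⊗ idm B.
Proof.
  apply lcancel.
  apply (iso_cancel_l ((assoc unit unit A ⊗ idm B) ;; assoc unit (tens unit A) B)
                      (assoc_inv unit (tens unit A) B ;; (assoc_inv unit unit A ⊗ idm B))).
  { ra. rewrite <- (seq_assoc _ _ _ _ _ (assoc_inv unit unit A ⊗ idm B)), <- tens_seq, assoc_inv_r, seq_idl, tens_id, seq_idl, assoc_inv_r. reflexivity. }
  rewrite tsr. rewrite <- seq_assoc.
  rewrite pentagon. ra. rewrite triangle.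
  rewrite <- (tens_id _ A B). rewrite <- !assoc_nat.
  rewrite <- seq_assoc, <- tsl, triangle.
  reflexivity.
Qed.

Lemma kc {C : poset_smc} : lunit (@unit C) = runit unit.
Proof.
  apply rcancel. rewrite <- triangle, <- ka.
  f_equal.
  apply (iso_cancel_r (lunit unit) (lunit_inv unit)); [apply lunit_inv_l|].
  symmetry. apply lunit_nat.
Qed.

Lemma kb' {C : poset_smc} (A B : ob C) :
  assoc_inv A B unit ;; runit (tens A B) = idm A ⊗ runit B.
Proof. rewrite kb, a'K. reflexivity. Qed.
Lemma ka' {C : poset_smc} (A B : ob C) :
  lunit (tens A B) = assoc_inv unit A B ;; (lunit A ⊗ idm B).
Proof. rewrite <- ka, a'K. reflexivity. Qed.
Lemma tri' {C : poset_smc} (X Y : ob C) :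
  (runit_inv X ⊗ idm Y) ;; assoc X unit Y = idm X ⊗ lunit_inv Y.
Proof.
  apply (iso_cancel_r (idm X ⊗ lunit Y) (idm X ⊗ lunit_inv Y)).
  { rewrite <- tens_seq, seq_idl, lunit_inv_l, tens_id. reflexivity. }
  ra. rewrite triangle, <- tens_seq, seq_idl, runit_inv_r, tens_id, <- tens_seq, seq_idl, lunit_inv_r, tens_id.
  reflexivity.
Qed.


Definition eta {C : poset_smc} (CB : cartesian_bicategory C) (X : ob C) : hom C unit (tens X X) :=
  codisc CB X ;; copy CB X.
Definition eps {C : poset_smc} (CB : cartesian_bicategory C) (X : ob C) : hom C (tens X X) unit :=
  cocopy CB X ;; disc CB X.

Lemma S2 {C : poset_smc} (CB : cartesian_bicategory C) (X : ob C) :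
  runit_inv X ;; (idm X ⊗ eta CB X) ;; assoc_inv X X X ;; (eps CB X ⊗ idm X) ;; lunit X = idm X.
Proof.
  unfold eta, eps. rewrite tsr, tsl. ra.
  rewrite (rw3 _ _ _ _ _ (frobenius_r _ _ X)). ra.
  rewrite (rw3 _ _ _ _ _ (cocopy_unitr _ _ X)), seq_idl.
  rewrite <- seq_assoc. apply copy_unitl.
Qed.

Lemma S1 {C : poset_smc} (CB : cartesian_bicategory C) (X : ob C) :
  lunit_inv X ;; (eta CB X ⊗ idm X) ;; assoc X X X ;; (idm X ⊗ eps CB X) ;; runit X = idm X.
Proof.
  unfold eta, eps. rewrite tsr, tsl. ra.
  rewrite (rw3 _ _ _ _ _ (frobenius_l _ _ X)). ra.
  rewrite (rw3 _ _ _ _ _ (cocopy_unitl _ _ X)), seq_idl.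
  rewrite <- seq_assoc. apply copy_unitr.
Qed.

Lemma copy_as {C : poset_smc} (CB : cartesian_bicategory C) (X : ob C) :
  copy CB X = runit_inv X ;; (idm X ⊗ eta CB X) ;; assoc_inv X X X ;; (cocopy CB X ⊗ idm X).
Proof.
  unfold eta. rewrite tsr. ra.
  rewrite <- (seq_assoc _ _ _ _ _ (idm X ⊗ copy CB X) (assoc_inv X X X)), frobenius_r.
  rewrite <- !seq_assoc, cocopy_unitr, seq_idl. reflexivity.
Qed.

Lemma cocopy_lax {C : poset_smc} (CB : cartesian_bicategory C) (X Y : ob C) (a : hom C X Y) :
  cocopy CB X ;; a ≤ (a ⊗ a) ;; cocopy CB Y.
Proof.
  apply (lt _ (cocopy CB X ;; (a ;; copy CB Y) ;; cocopy CB Y)).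
  { apply leq. ra. rewrite special, seq_idr. reflexivity. }
  apply (lt _ (cocopy CB X ;; (copy CB X ;; (a ⊗ a)) ;; cocopy CB Y)).
  { apply sml. apply smr. apply lax_copy. }
  apply (lt _ (idm _ ;; (a ⊗ a) ;; cocopy CB Y)).
  { rewrite <- !seq_assoc. apply sml. apply sml. apply copy_adj_counit. }
  rewrite seq_idl. apply lr.
Qed.



Lemma mE1 {C : poset_smc} (B : boolean_homs C) {X Y : ob C} (a b : hom C X Y) : bmeet C B X Y a b ≤ a.
Proof. apply (proj1 (proj1 (bmeet_glb C B X Y a b _) (lr _))). Qed.
Lemma mE2 {C : poset_smc} (B : boolean_homs C) {X Y : ob C} (a b : hom C X Y) : bmeet C B X Y a b ≤ b.
Proof. apply (proj2 (proj1 (bmeet_glb C B X Y a b _) (lr _))). Qed.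
Lemma mI {C : poset_smc} (B : boolean_homs C) {X Y : ob C} (a b z : hom C X Y) :
  z ≤ a -> z ≤ b -> z ≤ bmeet C B X Y a b.
Proof. intros; apply bmeet_glb; auto. Qed.
Lemma jI1 {C : poset_smc} (B : boolean_homs C) {X Y : ob C} (a b : hom C X Y) : a ≤ bjoin C B X Y a b.
Proof. apply (proj1 (proj1 (bjoin_lub C B X Y a b _) (lr _))). Qed.
Lemma jI2 {C : poset_smc} (B : boolean_homs C) {X Y : ob C} (a b : hom C X Y) : b ≤ bjoin C B X Y a b.
Proof. apply (proj2 (proj1 (bjoin_lub C B X Y a b _) (lr _))). Qed.
Lemma jE {C : poset_smc} (B : boolean_homs C) {X Y : ob C} (a b z : hom C X Y) :
  a ≤ z -> b ≤ z -> bjoin C B X Y a b ≤ z.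
Proof. intros; apply bjoin_lub; auto. Qed.

Lemma B1 {C : poset_smc} (B : boolean_homs C) {X Y : ob C} (a b : hom C X Y) :
  bmeet C B X Y a b ≤ bbot C B X Y -> a ≤ bneg B b.
Proof.
  intros H.
  apply (lt _ (bmeet C B X Y a (btop C B X Y))).
  { apply mI. apply lr. apply btop_max. }
  rewrite <- (bneg_join C B X Y b), bdistr.
  apply jE.
  - eapply lt. apply H. apply bbot_min.
  - apply mE2.
Qed.

Lemma B1' {C : poset_smc} (B : boolean_homs C) {X Y : ob C} (a b : hom C X Y) :
  a ≤ bneg B b -> bmeet C B X Y a b ≤ bbot C B X Y.
Proof.
  intros H. rewrite <- (bneg_meet C B X Y b).
  apply mI. apply mE2. eapply lt. apply mE1. exact H.
Qed.

Lemma neg_swap {C : poset_smc} (B : boolean_homs C) {X Y : ob C} (a b : hom C X Y) :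
  a ≤ bneg B b -> b ≤ bneg B a.
Proof.
  intros H. apply B1. eapply lt; [|apply (B1' B a b H)]. apply mI. apply mE2. apply mE1.
Qed.

Lemma M1 {C : poset_smc} (CB : cartesian_bicategory C) (B : boolean_homs C) {X Y : ob C} (u v : hom C X Y) :
  bmeet C B X Y u v ≤ copy CB X ;; (u ⊗ v) ;; cocopy CB Y.
Proof.
  set (m := bmeet C B X Y u v).
  apply (lt _ (m ;; copy CB Y ;; cocopy CB Y)).
  { apply leq. rewrite seq_assoc, special, seq_idr. reflexivity. }
  apply (lt _ (copy CB X ;; (m ⊗ m) ;; cocopy CB Y)).
  { apply sml. apply lax_copy. }
  apply sml. apply smr. apply tm. apply mE1. apply mE2.
Qed.

Lemma cocopy_le_r {C : poset_smc} (CB : cartesian_bicategory C) (X : ob C) :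
  cocopy CB X ≤ (idm X ⊗ disc CB X) ;; runit X.
Proof.
  apply (lt _ (cocopy CB X ;; copy CB X ;; (idm X ⊗ disc CB X) ;; runit X)).
  { apply leq. ra. rewrite <- (seq_assoc _ _ _ _ _ (copy CB X)), copy_unitr, seq_idr. reflexivity. }
  ra. rewrite <- seq_assoc. eapply lt. apply sml. apply copy_adj_counit. rewrite seq_idl. apply lr.
Qed.
Lemma cocopy_le_l {C : poset_smc} (CB : cartesian_bicategory C) (X : ob C) :
  cocopy CB X ≤ (disc CB X ⊗ idm X) ;; lunit X.
Proof.
  apply (lt _ (cocopy CB X ;; copy CB X ;; (disc CB X ⊗ idm X) ;; lunit X)).
  { apply leq. ra. rewrite <- (seq_assoc _ _ _ _ _ (copy CB X)), copy_unitl, seq_idr. reflexivity. }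
  ra. rewrite <- seq_assoc. eapply lt. apply sml. apply copy_adj_counit. rewrite seq_idl. apply lr.
Qed.

Lemma M2l {C : poset_smc} (CB : cartesian_bicategory C) {X Y : ob C} (u v : hom C X Y) :
  copy CB X ;; (u ⊗ v) ;; cocopy CB Y ≤ u.
Proof.
  eapply lt. apply smr. apply cocopy_le_r.
  ra. rewrite <- (seq_assoc _ _ _ _ _ (u ⊗ v)), <- tens_seq, seq_idr.
  eapply lt. apply smr. apply sml. apply tm. apply lr. apply lax_disc.
  rewrite (tx2 u (disc CB X)). ra. rewrite runit_nat. rewrite (rw3 _ _ _ _ _ (copy_unitr _ _ X)), seq_idl. apply lr.
Qed.
Lemma M2r {C : poset_smc} (CB : cartesian_bicategory C) {X Y : ob C} (u v : hom C X Y) :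
  copy CB X ;; (u ⊗ v) ;; cocopy CB Y ≤ v.
Proof.
  eapply lt. apply smr. apply cocopy_le_l.
  ra. rewrite <- (seq_assoc _ _ _ _ _ (u ⊗ v)), <- tens_seq, seq_idr.
  eapply lt. apply smr. apply sml. apply tm. apply lax_disc. apply lr.
  rewrite (tx1 (disc CB X) v). ra. rewrite lunit_nat. rewrite (rw3 _ _ _ _ _ (copy_unitl _ _ X)), seq_idl. apply lr.
Qed.
Lemma M2 {C : poset_smc} (CB : cartesian_bicategory C) (B : boolean_homs C) {X Y : ob C} (u v : hom C X Y) :
  copy CB X ;; (u ⊗ v) ;; cocopy CB Y ≤ bmeet C B X Y u v.
Proof. apply mI. apply M2l. apply M2r. Qed.

Lemma disc_map {C : poset_smc} (CB : cartesian_bicategory C) (X : ob C) : is_map CB (disc CB X).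
Proof.
  split.
  - rewrite copy_unit.
    apply (iso_cancel_r (lunit unit) (lunit_inv unit)). apply lunit_inv_l.
    rewrite seq_assoc, lunit_inv_r, seq_idr.
    rewrite (tx1 (disc CB X) (disc CB X)). ra. rewrite lunit_nat.
    rewrite (rw3 _ _ _ _ _ (copy_unitl _ _ X)), seq_idl. reflexivity.
  - rewrite disc_unit, seq_idr. reflexivity.
Qed.

Lemma top_le {C : poset_smc} (CB : cartesian_bicategory C) {X Y : ob C} (t : hom C X Y) :
  t ≤ disc CB X ;; codisc CB Y.
Proof.
  apply (lt _ (t ;; (disc CB Y ;; codisc CB Y))).
  { apply (lt _ (t ;; idm Y)). apply leq. symmetry. apply seq_idr. apply smr. apply disc_adj_unit. }
  rewrite <- seq_assoc. apply sml. apply lax_disc.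
Qed.

Lemma labs {C : poset_smc} (CB : cartesian_bicategory C) (B : boolean_homs C) (HP : peircean CB B)
  {X Y Z : ob C} (a : hom C X Y) : a ;; bbot C B Y Z ≤ bbot C B X Z.
Proof.
  apply (lt _ (a ;; (disc CB Y ;; bneg B (codisc CB Z)))).
  { apply smr. apply bbot_min. }
  rewrite <- seq_assoc. eapply lt. apply sml. apply lax_disc.
  rewrite (HP _ _ _ _ _ (disc_map CB X)).
  rewrite <- (bneg_meet C B X Z (disc CB X ;; codisc CB Z)).
  apply mI. apply top_le. apply lr.
Qed.


Lemma pentA {C : poset_smc} (W X Y Z : ob C) :
  assoc W X (tens Y Z) ;; (idm W ⊗ assoc_inv X Y Z) =
  assoc_inv (tens W X) Y Z ;; (assoc W X Y ⊗ idm Z) ;; assoc W (tens X Y) Z.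
Proof.
  apply (iso_cancel_r (idm W ⊗ assoc X Y Z) (idm W ⊗ assoc_inv X Y Z)).
  { rewrite <- tens_seq, seq_idl, assoc_inv_l, tens_id. reflexivity. }
  ra. rewrite <- tens_seq, seq_idl, assoc_inv_r, tens_id, seq_idr.
  rewrite <- (seq_assoc _ _ _ _ _ (assoc W X Y ⊗ idm Z)), pentagon, a'K. reflexivity.
Qed.

Lemma kbi {C : poset_smc} (A B : ob C) :
  idm A ⊗ runit_inv B = runit_inv (tens A B) ;; assoc A B unit.
Proof.
  apply (iso_cancel_r (idm A ⊗ runit B) (idm A ⊗ runit_inv B)).
  { rewrite <- tens_seq, seq_idl, runit_inv_l, tens_id. reflexivity. }
  rewrite <- tens_seq, seq_idl, runit_inv_r, tens_id.
  ra. rewrite <- kb, runit_inv_r. reflexivity.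
Qed.

Lemma frobA {C : poset_smc} (CB : cartesian_bicategory C) (Y : ob C) :
  (copy CB Y ⊗ idm Y) ;; assoc Y Y Y ;; (idm Y ⊗ eps CB Y) ;; runit Y = cocopy CB Y.
Proof.
  unfold eps. rewrite tsr. ra.
  rewrite (rw3 _ _ _ _ _ (frobenius_l _ _ Y)). ra.
  rewrite <- (seq_assoc _ _ _ _ _ (copy CB Y)), copy_unitr, seq_idr. reflexivity.
Qed.

Lemma Kpp {C : poset_smc} (CB : cartesian_bicategory C) (Y X : ob C) :
  (copy CB Y ⊗ idm (tens Y X)) ;; assoc Y Y (tens Y X) ;; (idm Y ⊗ assoc_inv Y Y X)
    ;; (idm Y ⊗ (eps CB Y ⊗ idm X)) ;; (idm Y ⊗ lunit X)
  = assoc_inv Y Y X ;; (cocopy CB Y ⊗ idm X).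
Proof.
  ra. rewrite (rw2 _ _ _ _ (pentA Y Y Y X)).
  rewrite <- (tens_id _ Y X). ra.
  rewrite (rw2 _ _ _ _ (assoc_inv_nat _ _ _)).
  ra. rewrite (rw2 _ _ _ _ (eq_sym (assoc_nat _ _ _ _ _ _ _ _ _ _))).
  ra. rewrite triangle.
  rewrite <- (frobA CB Y). rewrite !tsl. ra. reflexivity.
Qed.

Lemma Kl {C : poset_smc} (CB : cartesian_bicategory C) {X Y : ob C} (c : hom C X Y) :
  copy CB Y ;; (idm Y ⊗ converse CB c) =
  runit_inv Y ;; (idm Y ⊗ eta CB X) ;; assoc_inv Y X X ;; ((idm Y ⊗ c) ⊗ idm X) ;; (cocopy CB Y ⊗ idm X).
Proof.
  unfold converse.
  change (codisc CB X ;; copy CB X) with (eta CB X).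
  change (cocopy CB Y ;; disc CB Y) with (eps CB Y).
  rewrite !tsr. ra.
  rewrite kbi. ra. rewrite (rw2 _ _ _ _ (runit_inv_nat (copy CB Y))). ra.
  rewrite (rw2 _ _ _ _ (eq_sym (assoc_nat _ _ _ _ _ _ _ (idm Y) (idm Y) (eta CB X)))).
  ra. rewrite tens_id. rewrite (rw2 _ _ _ _ (eq_sym (tens_seq _ _ _ _ _ _ _ _ _ _ _))), seq_idr, seq_idl.
  rewrite (tx2 (copy CB Y) (eta CB X)). ra.
  rewrite (rw2 _ _ _ _ (eq_sym (tsr _ _))).
  rewrite <- (assoc_inv_nat (idm Y) c (idm X)). rewrite tsr. ra.
  rewrite (rw2 _ _ _ _ (eq_sym (assoc_nat _ _ _ _ _ _ _ (idm Y) (idm Y) _))).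
  ra. rewrite tens_id.
  rewrite (rw2 _ _ _ _ (eq_sym (tens_seq _ _ _ _ _ _ _ (copy CB Y) (idm (tens Y Y)) (idm (tens X X)) (c ⊗ idm X)))), seq_idr, seq_idl.
  rewrite (tx2 (copy CB Y) (c ⊗ idm X)). ra.
  rewrite (rw2 _ _ _ _ (eq_sym (assoc_inv_nat (idm Y) c (idm X)))).
  ra. rewrite <- Kpp. ra. reflexivity.
Qed.

Lemma Gp {C : poset_smc} (CB : cartesian_bicategory C) {X Y : ob C} (a : hom C X Y) :
  copy CB X ;; (a ⊗ idm X) ≤ a ;; copy CB Y ;; (idm Y ⊗ converse CB a).
Proof.
  rewrite seq_assoc, Kl.
  rewrite (copy_as CB X).
  apply (lt _ (runit_inv X ;; (idm X ⊗ eta CB X) ;; assoc_inv X X X ;; (((a ⊗ a) ;; cocopy CB Y) ⊗ idm X))).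
  { ra. apply smr. apply smr. apply smr. rewrite <- tsl. apply tm. apply cocopy_lax. apply lr. }
  apply leq. rewrite tsl. ra.
  rewrite (rw2 _ _ _ _ (runit_inv_nat a)). ra.
  rewrite (rw2 _ _ _ _ (tcomm a (eta CB X))). ra.
  rewrite <- (tens_id _ X X). ra.
  rewrite (rw2 _ _ _ _ (assoc_inv_nat a (idm X) (idm X))).
  ra. rewrite (rw2 _ _ _ _ (eq_sym (tsl _ _))).
  rewrite <- (tens_seq _ _ _ _ _ _ _ a (idm Y) (idm X) a), seq_idl, seq_idr.
  reflexivity.
Qed.


Definition nm {C : poset_smc} (CB : cartesian_bicategory C) {X Y : ob C} (c : hom C X Y) : hom C (tens X Y) unit :=
  (c ⊗ idm Y) ;; eps CB Y.
Definition Tr {C : poset_smc} (CB : cartesian_bicategory C) {X Y : ob C} (e : hom C (tens Y X) unit) : hom C Y X :=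
  runit_inv Y ;; (idm Y ⊗ eta CB X) ;; assoc_inv Y X X ;; (e ⊗ idm X) ;; lunit X.

Lemma conv_tr {C : poset_smc} (CB : cartesian_bicategory C) {X Y : ob C} (c : hom C X Y) :
  converse CB c = Tr CB (sym Y X ;; nm CB c).
Proof.
  unfold converse, Tr, nm.
  change (codisc CB X ;; copy CB X) with (eta CB X).
  change (cocopy CB Y ;; disc CB Y) with (eps CB Y).
  f_equal. rewrite <- seq_assoc, tsl. f_equal.
  rewrite <- sym_nat. ra. rewrite tsl. ra. rewrite <- (tsl (sym Y Y) (eps CB Y)). unfold eps. rewrite <- (seq_assoc _ _ _ _ _ (sym Y Y)), cocopy_comm. reflexivity.
Qed.

Lemma Tr1 {C : poset_smc} (CB : cartesian_bicategory C) {X Y : ob C} (c : hom C Y X) :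
  Tr CB (nm CB c) = c.
Proof.
  unfold Tr, nm. rewrite tsl. ra.
  rewrite (rw2 _ _ _ _ (eq_sym (assoc_inv_nat c (idm X) (idm X)))).
  ra. rewrite tens_id.
  rewrite (rw2 _ _ _ _ (eq_sym (tcomm c (eta CB X)))).
  ra. rewrite (rw2 _ _ _ _ (eq_sym (runit_inv_nat c))).
  pose proof (S2 CB X) as H. ra. transitivity (c ;; idm X); [|apply seq_idr]. f_equal.
  repeat rewrite seq_assoc in H. exact H.
Qed.

Lemma pentB {C : poset_smc} (W X Y Z : ob C) :
  (assoc_inv W X Y ⊗ idm Z) ;; assoc (tens W X) Y Z =
  assoc W (tens X Y) Z ;; (idm W ⊗ assoc X Y Z) ;; assoc_inv W X (tens Y Z).
Proof.
  apply (iso_cancel_r (assoc W X (tens Y Z)) (assoc_inv W X (tens Y Z))). apply assoc_inv_l.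
  ra. rewrite assoc_inv_r, seq_idr. rewrite <- pentagon.
  ra. rewrite <- (seq_assoc _ _ _ _ _ (assoc_inv W X Y ⊗ idm Z)), <- tens_seq, assoc_inv_r, seq_idl, tens_id, seq_idl.
  reflexivity.
Qed.

Lemma assoc_conj {C : poset_smc} {X Y Z X' Y' Z' : ob C} (a : hom C X X') (b : hom C Y Y') (c : hom C Z Z') :
  (a ⊗ b) ⊗ c = assoc X Y Z ;; (a ⊗ (b ⊗ c)) ;; assoc_inv X' Y' Z'.
Proof. rewrite <- assoc_nat. ra. rewrite assoc_inv_l, seq_idr. reflexivity. Qed.

Lemma Tr2 {C : poset_smc} (CB : cartesian_bicategory C) {X Y : ob C} (e : hom C (tens Y X) unit) :
  nm CB (Tr CB e) = e.
Proof.
  unfold nm, Tr. rewrite !tsl. ra.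
  rewrite (assoc_conj e (idm X) (idm X)). ra.
  rewrite (rw2 _ _ _ _ (eq_sym (ka' X X))).
  rewrite tens_id.
  rewrite <- lunit_nat.
  rewrite (rw2 _ _ _ _ (tcomm e (eps CB X))).
  rewrite kc. ra. rewrite runit_nat.
  rewrite (rw2 _ _ _ _ (pentB Y X X X)). ra.
  rewrite <- (tens_id _ Y X).
  rewrite (rw2 _ _ _ _ (eq_sym (assoc_inv_nat (idm Y) (idm X) (eps CB X)))).
  ra. rewrite (rw2 _ _ _ _ (kb' Y X)).
  rewrite (rw2 _ _ _ _ (assoc_nat _ _ _ _ _ _ _ (idm Y) (eta CB X) (idm X))).
  ra. rewrite (rw2 _ _ _ _ (tri' Y X)). ra.
  transitivity ((idm Y ⊗ (lunit_inv X ;; (eta CB X ⊗ idm X) ;; assoc X X X ;; (idm X ⊗ eps CB X) ;; runit X)) ;; e).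
  { rewrite !tsr. ra. reflexivity. }
  rewrite S1, tens_id, seq_idl. reflexivity.
Qed.


Lemma conv_conv {C : poset_smc} (CB : cartesian_bicategory C) {X Y : ob C} (c : hom C X Y) :
  converse CB (converse CB c) = c.
Proof.
  rewrite (conv_tr CB (converse CB c)). rewrite (conv_tr CB c). rewrite Tr2.
  rewrite <- seq_assoc, sym_inv, seq_idl. apply Tr1.
Qed.

Lemma conv_mono {C : poset_smc} (CB : cartesian_bicategory C) {X Y : ob C} (c d : hom C X Y) :
  c ≤ d -> converse CB c ≤ converse CB d.
Proof.
  intros H. unfold converse.
  apply sml. apply sml. apply sm; [apply sml; apply lr|]. apply tm; [|apply lr]. apply tm; [apply lr|exact H].
Qed.

Lemma conv_le {C : poset_smc} (CB : cartesian_bicategory C) {X Y : ob C} (c : hom C X Y) (d : hom C Y X) :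
  c ≤ converse CB d -> converse CB c ≤ d.
Proof. intros H. rewrite <- (conv_conv CB d). apply conv_mono. exact H. Qed.

Lemma CD {C : poset_smc} (CB : cartesian_bicategory C) (B : boolean_homs C) {X Y : ob C} (p q : hom C X Y) :
  bmeet C B X Y p q ≤ bbot C B X Y ->
  bmeet C B Y X (converse CB p) (converse CB q) ≤ bbot C B Y X.
Proof.
  intros H.
  set (z := bmeet C B Y X (converse CB p) (converse CB q)).
  assert (Hz : converse CB z ≤ bbot C B X Y).
  { eapply lt; [|exact H]. apply mI; apply conv_le; [apply mE1|apply mE2]. }
  rewrite <- (conv_conv CB z). apply conv_le. eapply lt. exact Hz. apply bbot_min.
Qed.

Lemma L1g {C : poset_smc} (CB : cartesian_bicategory C) (B : boolean_homs C) (HP : peircean CB B)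
  {X Y : ob C} (a : hom C X Y) (g : hom C Y X) :
  bmeet C B Y X g (converse CB a) ≤ bbot C B Y X -> a ;; g ≤ bneg B (idm X).
Proof.
  intros H. apply B1.
  eapply lt. apply M1.
  rewrite tsl. rewrite <- seq_assoc.
  eapply lt. apply sml. apply sml. apply Gp.
  apply (lt _ (a ;; (copy CB Y ;; (g ⊗ converse CB a) ;; cocopy CB X))).
  { apply leq. rewrite (tx2 g (converse CB a)). ra. reflexivity. }
  eapply lt. apply smr. apply (M2 CB B).
  eapply lt. apply smr. exact H.
  apply (labs CB B HP).
Qed.

Lemma meet_neg_l {C : poset_smc} (B : boolean_homs C) {X Y : ob C} (c : hom C X Y) :
  bmeet C B X Y (bneg B c) c ≤ bbot C B X Y.
Proof. rewrite <- (bneg_meet C B X Y c). apply mI. apply mE2. apply mE1. Qed.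
Lemma meet_neg_r {C : poset_smc} (B : boolean_homs C) {X Y : ob C} (c : hom C X Y) :
  bmeet C B X Y c (bneg B c) ≤ bbot C B X Y.
Proof. rewrite (bneg_meet C B X Y c). apply lr. Qed.

Theorem lemma67 (C : poset_smc) (CB : cartesian_bicategory C) (B : boolean_homs C)
  (HP : peircean CB B) (X Y : ob C) (c : hom C X Y) :
  c ;; converse CB (bneg B c) ≤ did B X /\
  idm Y ≤ dseq B (converse CB (bneg B c)) c /\
  converse CB (bneg B c) ;; c ≤ did B Y /\
  idm X ≤ dseq B c (converse CB (bneg B c)).
Proof.
  unfold did, dseq.
  set (w := converse CB (bneg B c)).
  split; [|split; [|split]].
  - apply (L1g CB B HP). unfold w. apply CD. apply meet_neg_l.
  - apply neg_swap. apply (L1g CB B HP).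
    rewrite <- (conv_conv CB (bneg B c)).
    apply CD. change (converse CB (bneg B c)) with w. apply meet_neg_r.
  - apply (L1g CB B HP). unfold w. rewrite conv_conv. apply meet_neg_r.
  - apply neg_swap. apply (L1g CB B HP). fold w. apply meet_neg_l.
Qed.
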